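(* Let $n$ be a natural number and let $(A,+,\circ)$ be a left brace of cardinality $p^{n}$, where $p$ is a prime with $p>n+1$. Then $pA=\{pa: a\in A\}$ is a brace (a sub-brace of $A$), and every product of any $p-1$ elements of $pA$ under the operation $*$ (with any distribution of brackets) is zero; hence $pA$ is a strongly nilpotent brace of nilpotency index at most $p-1$. Moreover, every $*$-product (with any distribution of brackets) of $i$ elements of $pA$ together with any number of elements of $A$ lies in $p^{i}A$; hence every such product containing $p-1$ elements from $pA$ (and any number of elements from $A$) is zero. Finally, $p^{p-1}A=0$.
   Context: A (left) brace is a set $A$ with operations $+,\circ$ such that $(A,+)$ is an abelian group, $(A,\circ)$ is a group, and $a\circ(b+c)+a=a\circ b+a\circ c$ for all $a,b,c\in A$. One writes $a*b=a\circ b-a-b$; then $a*(b+c)=a*b+a*c$. For an integer $m$, $mA=\{ma:a\in A\}$. A brace $B$ is strongly nilpotent if there is $k$ with $B^{[k]}=0$, where $B^{[1]}=B$ and $B^{[i]}$ is the additive span of all $a*b$ with $a\in B^{[j]}$, $b\in B^{[i-j]}$, $0<j<i$; the least such $k$ is the nilpotency index. *)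

(* Defs.v *)
From mathcomp Require Import all_boot all_order all_algebra.
Set Implicit Arguments. Unset Strict Implicit. Unset Printing Implicit Defensive.
Import GRing.Theory.
Local Open Scope ring_scope.

Section BraceDefs.
Variable A : zmodType.
Variable circ : A -> A -> A.

Definition circ_id (e : A) : Prop := forall x, circ e x = x /\ circ x e = x.

Definition is_brace : Prop :=
  [/\ (forall a b c, circ a (circ b c) = circ (circ a b) c),
      (exists e, circ_id e /\ forall a, exists b, circ a b = e /\ circ b a = e)
    & (forall a b c, circ a (b + c) + a = circ a b + circ a c)].

Definition star (a b : A) : A := circ a b - a - b.

Definition is_subbrace (S : A -> Prop) : Prop :=
  S 0 /\ (forall a b, S a -> S b -> S (a + b)) /\ (forall a, S a -> S (- a)) /\
  (forall e, circ_id e -> S e) /\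
  (forall a b, S a -> S b -> S (circ a b)) /\
  (forall e a b, circ_id e -> S a -> circ a b = e -> S b).

Definition multA (m : nat) (x : A) : Prop := exists a : A, x = a *+ m.

Inductive spow (B : A -> Prop) : nat -> A -> Prop :=
| spow_base : forall x, B x -> spow B 1 x
| spow_star : forall i j a b, (0 < j)%N -> (j < i)%N ->
    spow B j a -> spow B (i - j) b -> spow B i (star a b)
| spow_zero : forall i, (1 < i)%N -> spow B i 0
| spow_add : forall i x y, (1 < i)%N -> spow B i x -> spow B i y -> spow B i (x + y)
| spow_opp : forall i x, (1 < i)%N -> spow B i x -> spow B i (- x).

Definition snilp_le (B : A -> Prop) (k : nat) : Prop :=
  forall x, spow B k x -> x = 0.

(* bracketed *-products; each leaf carries an element and a flag
   saying whether it is counted as one of the elements of pA *)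
Inductive sterm : Type :=
| Leaf : bool -> A -> sterm
| Node : sterm -> sterm -> sterm.

Fixpoint seval (t : sterm) : A :=
  match t with Leaf _ a => a | Node t1 t2 => star (seval t1) (seval t2) end.

Fixpoint nleaves (t : sterm) : nat :=
  match t with Leaf _ _ => 1 | Node t1 t2 => nleaves t1 + nleaves t2 end.

Fixpoint nflag (t : sterm) : nat :=
  match t with Leaf b _ => nat_of_bool b | Node t1 t2 => nflag t1 + nflag t2 end.

Fixpoint flagged_in (S : A -> Prop) (t : sterm) : Prop :=
  match t with
  | Leaf b a => b -> S a
  | Node t1 t2 => flagged_in S t1 /\ flagged_in S t2 end.

Fixpoint leaves_in (S : A -> Prop) (t : sterm) : Prop :=
  match t with
  | Leaf _ a => S a
  | Node t1 t2 => leaves_in S t1 /\ leaves_in S t2 end.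

End BraceDefs.

(* Main.v *)
Require Import Defs.
From HB Require Import structures.
From mathcomp Require Import all_boot all_order all_algebra all_fingroup all_solvable.
Set Implicit Arguments. Unset Strict Implicit. Unset Printing Implicit Defensive.
Import GRing.Theory.
Local Open Scope ring_scope.



Section Basics.
Variables (A : finZmodType) (circ : A -> A -> A).
Hypothesis hB : is_brace circ.

Lemma circA a b c : circ a (circ b c) = circ (circ a b) c.
Proof. by case: hB. Qed.
Lemma circD a b c : circ a (b + c) = circ a b + circ a c - a.
Proof. by case: hB => _ _ /(_ a b c) <-; rewrite addrK. Qed.
Lemma circ_a0 a : circ a 0 = a.
Proof.
have h := circD a 0 0; rewrite addr0 in h.
have := congr1 (fun y => y + a) h; rewrite /= subrK => /addrI; done.
Qed.
Lemma circ_id0 e : circ_id circ e -> e = 0.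
Proof. by move=> /(_ 0) [h _]; rewrite -h circ_a0. Qed.
Lemma circ_0a a : circ 0 a = a.
Proof. by case: hB => _ [e [he _]] _; have := he; move/circ_id0 => e0; case: (he a); rewrite e0. Qed.
Lemma circ_inv a : exists b, circ a b = 0 /\ circ b a = 0.
Proof. case: hB => _ [e [he hi]] _; rewrite -(circ_id0 he); exact: hi. Qed.

Fact lam_key : unit. Proof. exact: tt. Qed.
Definition lam a x := locked_with lam_key (circ a x - a).
Lemma lamE a x : lam a x = circ a x - a. Proof. by rewrite /lam unlock. Qed.
Lemma lamD a x y : lam a (x + y) = lam a x + lam a y.
Proof. by rewrite !lamE circD addrACA addrA. Qed.
Lemma lam0 a : lam a 0 = 0.
Proof. by rewrite !lamE circ_a0 subrr. Qed.
Lemma lamN a x : lam a (- x) = - lam a x.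
Proof. by apply/eqP; rewrite -addr_eq0 -lamD addNr lam0. Qed.
Lemma lamMn a x m : lam a (x *+ m) = lam a x *+ m.
Proof. elim: m => [|m IH]; first by rewrite !mulr0n lam0. by rewrite !mulrS lamD IH. Qed.
Lemma lamB a x y : lam a (x - y) = lam a x - lam a y.
Proof. by rewrite lamD lamN. Qed.
Lemma lam_0 x : lam 0 x = x.
Proof. by rewrite !lamE circ_0a subr0. Qed.
Lemma lamM a b x : lam (circ a b) x = lam a (lam b x).
Proof.
rewrite !lamE -circA.
set y := circ b x - b.
have -> : circ b x = b + y by rewrite /y addrC subrK.
by rewrite circD addrAC [circ a b + _]addrC addrK.
Qed.
Lemma star_lam a b : star circ a b = lam a b - b.
Proof. by rewrite /star !lamE. Qed.
Lemma starD a x y : star circ a (x + y) = star circ a x + star circ a y.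
Proof. by rewrite !star_lam lamD opprD addrACA. Qed.
Lemma starN a x : star circ a (- x) = - star circ a x.
Proof. by apply/eqP; rewrite -addr_eq0 -starD addNr star_lam lam0 subr0. Qed.
Lemma starMn a x m : star circ a (x *+ m) = star circ a x *+ m.
Proof.
elim: m => [|m IH]; first by rewrite !mulr0n star_lam lam0 subr0.
by rewrite !mulrS starD IH.
Qed.
Lemma star0 a : star circ a 0 = 0.
Proof. by rewrite star_lam lam0 subr0. Qed.
Lemma star_0 x : star circ 0 x = 0.
Proof. by rewrite star_lam lam_0 subrr. Qed.
Lemma circ_star a b : circ a b = a + b + star circ a b.
Proof. by rewrite /star -[circ a b - a - b]addrA -opprD [RHS]addrC subrK. Qed.
End Basics.



Section Grp.
Variables (A : finZmodType) (circ : A -> A -> A).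
Hypothesis hB : is_brace circ.

Definition Gt (_ : is_brace circ) : Type := A.
Definition GG := Gt hB.
HB.instance Definition _ := Finite.on GG.

Definition gmul (x y : GG) : GG := circ y x.
Definition ginv (x : GG) : GG := odflt (0 : A) [pick b : A | circ x b == 0].
Lemma gmulA : associative gmul.
Proof. by move=> x y z; rewrite /gmul circA. Qed.
Lemma gmul1 : left_id (0 : A) gmul.
Proof. by move=> x; rewrite /gmul circ_a0. Qed.
Lemma gmulV : left_inverse (0 : A) ginv gmul.
Proof.
move=> x; rewrite /gmul /ginv; case: pickP => [b /eqP //|].
by case: (circ_inv hB x) => b [hb _] /(_ b); rewrite hb eqxx.
Qed.
HB.instance Definition _ := Finite_isGroup.Build GG gmulA gmul1 gmulV.

End Grp.

Section Fix.
Variables (A : finZmodType) (circ : A -> A -> A).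
Hypothesis hB : is_brace circ.

Definition lact (x : A) (g : GG hB) : A := lam circ g x.
Lemma lact1 : lact^~ 1%g =1 id.
Proof. by move=> x; rewrite /lact lam_0. Qed.
Lemma lactM x : act_morph lact x.
Proof. by move=> a b; rewrite /lact -lamM. Qed.
Definition lto := TotalAction lact1 lactM.

Lemma fix_coset (p n : nat) (V : {group A}) : prime p -> #|A| = (p ^ n)%N ->
  (forall g v, v \in V -> lam circ g v \in V) -> V \proper [set: A] ->
  exists u, u \notin V /\ forall g, lam circ g u - u \in V.
Proof.
move=> pp cardA Vinv Vpr.
have key g u : ((lto^*)%act (V :* u) g = V :* (lam circ g u))%g.
  apply/eqP; rewrite eqEcard; apply/andP; split.
    apply/subsetP => y;   rewrite /= setactE => /imsetP [x /rcosetP [v Vv ->] ->].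
    apply/rcosetP; exists (lam circ g v); first exact: Vinv.
    by rewrite /= /lact lamD.
  by rewrite /= setactE card_imset ?card_rcoset //; apply: act_inj.
set S := rcosets V [set: A].
have SS g C : C \in S -> (lto^*)%act C g \in S.
  by case/rcosetsP => u _ ->; rewrite key; apply/rcosetsP; exists (lam circ g u).
have actS : [acts [set: GG hB], on S | (lto^*)%act].
  apply/actsP => g _ C; apply/idP/idP; last exact: SS.
  by move/(SS g^-1%g); rewrite actK.
have pG : pgroup p [set: GG hB].
  by rewrite /pgroup cardsT /= cardA pnatX pnat_id.
have := pgroup_fix_mod pG actS.
have cS : (#|S| %% p = 0)%N.
  change (indexg [set: A] V %% p = 0)%N.
  have : (indexg [set: A] V %| p ^ n)%N by rewrite -cardA -cardsT dvdn_indexg.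
  case/(dvdn_pfactor _ _ pp) => [[|k]] _ e.
    by move: (indexg_gt1 [set: A] V); rewrite e (proper_subn Vpr).
  by rewrite e expnS modnMr.
rewrite cS => /esym /eqP; rewrite -/(dvdn p _) => dF.
have VF : ((V : {set A}) \in 'Fix_(S | (lto^*)%act)([set: GG hB]))%g.
  rewrite inE; apply/andP; split.
    by apply/rcosetsP; exists 0; rewrite ?inE // rcoset1.
  apply/afixP => g _; rewrite -{1}(rcoset1 V) key.
  by rewrite (lam0 hB) rcoset1.
set F := ('Fix_(S | (lto^*)%act)([set: GG hB]))%g in dF VF *.
have : (0 < #|F :\ (V : {set A})|)%N.
  move: dF; rewrite (cardsD1 (V : {set A})) VF add1n; case: #|_| => //.
  by rewrite dvdn1 => /eqP p1; move: pp; rewrite p1.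
rewrite card_gt0 => /set0Pn [C /setD1P [CV]].
rewrite inE => /andP [/rcosetsP [u _ Cu] /afixP Cfix].
exists u; split.
  by apply: contra CV => uV; rewrite Cu rcoset_id.
move=> g; have := Cfix g (in_setT g); rewrite Cu key => e.
have : lam circ g u \in (V :* u)%g by rewrite -e rcoset_refl.
by case/rcosetP => v Vv ->; rewrite /= addrK.
Qed.
End Fix.



Section Filt.
Variables (A : finZmodType) (circ : A -> A -> A).
Hypothesis hB : is_brace circ.

Fixpoint Vs (i : nat) : {set A} :=
  if i is i'.+1 then [set v | [forall g : A, lam circ g v - v \in Vs i']] else [set 0].

Lemma VsS i v : (v \in Vs i.+1) = [forall g : A, lam circ g v - v \in Vs i].
Proof. by rewrite /= inE. Qed.

Lemma Vs_props i : [/\ group_set (Vs i), (forall g v, v \in Vs i -> lam circ g v \in Vs i)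
   & Vs i \subset Vs i.+1].
Proof.
elim: i => [|i [gi ii si]].
  split.
  - apply/group_setP; split; first by rewrite inE.
    by move=> x y; rewrite !inE => /eqP -> /eqP ->; rewrite mul1g.
  - by move=> g v; rewrite !inE => /eqP ->; rewrite (lam0 hB).
  - apply/subsetP => v; rewrite inE => /eqP ->; rewrite VsS; apply/forallP => g.
    by rewrite (lam0 hB) subrr inE.
have G1 : 0 \in Vs i by exact: (group_setP gi).1.
have GM x y : x \in Vs i -> y \in Vs i -> x + y \in Vs i.
  by move=> hx hy; exact: (group_setP gi).2 x y hx hy.
have GV x : x \in Vs i -> - x \in Vs i.
  move=> hx; have := @groupV _ (Group gi) x; rewrite /= hx; done.
split.
- apply/group_setP; split.
    by rewrite VsS; apply/forallP => g; rewrite (lam0 hB) subrr.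
  move=> x y; rewrite !VsS => /forallP hx /forallP hy; apply/forallP => g.
  have -> : lam circ g (x * y)%g - (x * y)%g = (lam circ g x - x) + (lam circ g y - y).
    by rewrite /= (lamD hB) opprD addrACA.
  exact: GM.
- move=> g v; rewrite !VsS => /forallP hv; apply/forallP => a.
  have -> : lam circ a (lam circ g v) - lam circ g v
      = (lam circ (circ a g) v - v) + - (lam circ g v - v).
    by rewrite (lamM hB) opprB addrA subrK.
  by apply: GM; [exact: hv | apply: GV; exact: hv].
- apply/subsetP => v; rewrite VsS => /forallP hv; rewrite VsS; apply/forallP => g.
  exact: (subsetP si).
Qed.

Lemma Vs_group i : group_set (Vs i). Proof. by case: (Vs_props i). Qed.
Definition VG i := Group (Vs_group i).

Lemma Vs_grow (p n : nat) : prime p -> #|A| = (p ^ n)%N ->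
  forall i, Vs i = [set: A] \/ (p ^ i %| #|Vs i|)%N.
Proof.
move=> pp cardA; elim=> [|i IH]; first by right; rewrite expn0 dvd1n.
have [_ ii si] := Vs_props i.
have [Ti|Ti] := eqVneq (Vs i) [set: A].
  by left; apply/eqP; rewrite eqEsubset subsetT -Ti.
have Vpr : VG i \proper [set: A] by rewrite properT.
have [u [uV uF]] := fix_coset hB (V := VG i) pp cardA ii Vpr.
have uS : u \in Vs i.+1 by rewrite VsS; apply/forallP.
have [Ts|Ts] := eqVneq (Vs i.+1) [set: A]; first by left.
right; case: IH => [Ti'|dv]; first by rewrite Ti' eqxx in Ti.
have sub : (VG i \subset VG i.+1) by [].
have := Lagrange sub => e.
have : (indexg (VG i.+1) (VG i) %| p ^ n)%N.
  apply: dvdn_trans (dvdn_indexg _ _) _; rewrite -cardA.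
  by rewrite -[X in (_ %| X)%N]cardsT cardSg ?subsetT.
case/(dvdn_pfactor _ _ pp) => [[|k]] _ ek.
  move: (indexg_gt1 (VG i.+1) (VG i)); rewrite ek /= => /esym/negbFE/subsetP/(_ u uS) uVi.
  by rewrite /= uVi in uV.
move: e; rewrite ek /= => <-.
by rewrite expnSr dvdn_mul // expnS dvdn_mulr.
Qed.

Lemma Vs_n (p n : nat) : prime p -> #|A| = (p ^ n)%N -> Vs n = [set: A].
Proof.
move=> pp cardA; case: (Vs_grow pp cardA n) => // dv.
have [Ts|Ts] := eqVneq (Vs n) [set: A] => //.
have : VG n \proper [set: A] by rewrite properT.
move/proper_card; rewrite cardsT cardA /= => lt.
have := dvdn_leq _ dv; rewrite card_gt0.
have : (0 : A) \in Vs n by exact: (group_setP (Vs_group n)).1.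
move=> h0; have ne : Vs n != set0 by apply/set0Pn; exists 0.
by move/(_ ne); rewrite leqNgt lt.
Qed.

Lemma star_Vs i g v : v \in Vs i.+1 -> star circ g v \in Vs i.
Proof. by rewrite VsS star_lam => /forallP. Qed.

Lemma Vs_add i x y : x \in Vs i -> y \in Vs i -> x + y \in Vs i.
Proof. exact: (group_setP (Vs_group i)).2. Qed.
Lemma Vs_0 i : 0 \in Vs i.
Proof. exact: (group_setP (Vs_group i)).1. Qed.
Lemma Vs_opp i x : x \in Vs i -> - x \in Vs i.
Proof. by move=> hx; have := @groupV _ (VG i) x; rewrite /= hx. Qed.
Lemma Vs_lam i g x : x \in Vs i -> lam circ g x \in Vs i.
Proof. by case: (Vs_props i) => _ h _; apply: h. Qed.
Lemma Vs_Mn i x m : x \in Vs i -> x *+ m \in Vs i.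
Proof. by move=> hx; elim: m => [|m IH]; rewrite ?mulr0n ?Vs_0 // mulrS Vs_add. Qed.
End Filt.



Section Gen.
Variables (A : zmodType) (L : A -> A).
Hypothesis LD : forall x y, L (x + y) = L x + L y.

Lemma L0 : L 0 = 0.
Proof. by have := LD 0 0; rewrite addr0 => /eqP; rewrite -subr_eq subrr eq_sym => /eqP. Qed.
Lemma LMn x c : L (x *+ c) = L x *+ c.
Proof. by elim: c => [|c IH]; rewrite ?mulr0n ?L0 // !mulrS LD IH. Qed.
Lemma Lsum k (F : 'I_k -> A) : L (\sum_(i < k) F i) = \sum_(i < k) L (F i).
Proof. exact: (big_morph L LD L0). Qed.

Lemma gen_binom k b :
  iter k (fun x => x + L x) b = \sum_(m < k.+1) iter m L b *+ 'C(k, m).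
Proof.
elim: k => [|k IH]; first by rewrite big_ord_recl big_ord0 /= addr0 mulr1n.
rewrite iterS IH Lsum.
rewrite [RHS]big_ord_recl /= bin0 mulr1n.
under [in RHS]eq_bigr => i _ do rewrite binS mulrnDr.
rewrite big_split /=.
rewrite [X in _ = _ + (_ + X)](eq_bigr (fun i : 'I_k.+1 => L (iter i L b *+ 'C(k, i)))); last first.
  by move=> i _; rewrite LMn.
rewrite addrA; congr (_ + _).
by rewrite [in LHS]big_ord_recl /= bin0 mulr1n [in RHS]big_ord_recr /= bin_small // mulr0n addr0.
Qed.

Lemma gen_geom a k :
  iter k (fun y => a + y + L y) 0 = \sum_(m < k) iter m L a *+ 'C(k, m.+1).
Proof.
elim: k => [|k IH]; first by rewrite big_ord0.
rewrite iterS IH Lsum.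
under [in RHS]eq_bigr => i _ do rewrite binS mulrnDr.
rewrite big_split /=.
rewrite [X in _ = X + _]big_ord_recr /= bin_small // mulr0n addr0.
rewrite [X in _ = _ + X]big_ord_recl /= bin0 mulr1n.
rewrite -addrA [a + _]addrC -addrA; congr (_ + _).
rewrite addrC; congr (_ + _).
by apply: eq_bigr => i _; rewrite LMn.
Qed.
End Gen.



Section MultA.
Variables (A : zmodType).
Lemma mA0 m : multA m (0 : A).
Proof. by exists 0; rewrite mul0rn. Qed.
Lemma mAD m (x y : A) : multA m x -> multA m y -> multA m (x + y).
Proof. by move=> [a ->] [b ->]; exists (a + b); rewrite mulrnDl. Qed.
Lemma mAN m (x : A) : multA m x -> multA m (- x).
Proof. by move=> [a ->]; exists (- a); rewrite mulNrn. Qed.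
Lemma mAMn m (x : A) c : multA m x -> multA m (x *+ c).
Proof. by move=> [a ->]; exists (a *+ c); rewrite -!mulrnA mulnC. Qed.
Lemma mA_mul m k (a : A) : multA m (a *+ (m * k)%N).
Proof. by exists (a *+ k); rewrite -mulrnA mulnC. Qed.
Lemma mA_sum m k (F : 'I_k -> A) : (forall i, multA m (F i)) -> multA m (\sum_(i < k) F i).
Proof. by move=> h; apply: (big_ind (multA m)) => //; [exact: mA0 | exact: mAD]. Qed.
End MultA.

Section Main.
Variables (A : finZmodType) (circ : A -> A -> A).
Hypothesis hB : is_brace circ.
Variables (p n : nat).
Hypotheses (pp : prime p) (cardA : #|A| = (p ^ n)%N) (np : (n < p)%N).

Lemma mA_lam m g (x : A) : multA m x -> multA m (lam circ g x).
Proof. by move=> [a ->]; exists (lam circ g a); rewrite (lamMn hB). Qed.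

Lemma Vs_mono i k : (i <= k)%N -> Vs circ i \subset Vs circ k.
Proof.
move=> /subnK <-; elim: (k - i)%N => [|d IH] //.
apply: subset_trans IH _; rewrite addSn.
by case: (Vs_props hB (d + i)).
Qed.

Lemma iter_Vs i m a b : b \in Vs circ i -> iter m (star circ a) b \in Vs circ (i - m).
Proof.
move=> hb; elim: m => [|m IH]; first by rewrite subn0.
rewrite iterS; move: IH; case e: (i - m)%N => [|k] IH.
  have -> : (i - m.+1 = 0)%N by rewrite subnS e.
  by move: IH; rewrite /= inE => /eqP ->; rewrite (star0 hB) inE.
have -> : (i - m.+1 = k)%N by rewrite subnS e.
exact: star_Vs.
Qed.

Lemma iter_zero m a b : (n <= m)%N -> iter m (star circ a) b = 0.
Proof.
move=> nm; have h : b \in Vs circ n by rewrite (Vs_n hB pp cardA) inE.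
have := iter_Vs m a h; have -> : (n - m = 0)%N by apply/eqP; rewrite subn_eq0.
by rewrite /= inE => /eqP.
Qed.

Lemma bin_dvd j m : (m.+1 < p)%N -> (p ^ j %| 'C(p ^ j, m.+1))%N.
Proof.
move=> mp; have := mul_bin_diag (p ^ j) m => e.
have : (p ^ j %| m.+1 * 'C(p ^ j, m.+1))%N by rewrite -e dvdn_mulr.
rewrite Gauss_dvdr // coprimeXl // prime_coprime //.
by apply/negP => /(dvdn_leq (ltn0Sn m)); rewrite leqNgt mp.
Qed.

Definition Tj j (x : A) := forall b, multA (p ^ j)%N (star circ x b).

Lemma T_circ j x y : Tj j x -> Tj j y -> Tj j (circ x y).
Proof.
move=> hx hy b.
have -> : star circ (circ x y) b = lam circ x (star circ y b) + star circ x b.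
  rewrite !star_lam (lamM hB) (lamB hB) addrA subrK //.
by apply: mAD; [apply: mA_lam | ].
Qed.

Definition cpow (a : A) k := iter k (circ a) 0.

Lemma lam_cpow a k b : lam circ (cpow a k) b = iter k (lam circ a) b.
Proof.
elim: k => [|k IH]; first by rewrite /cpow /= (lam_0 hB).
by rewrite /cpow iterS (lamM hB) -/(cpow a k) IH.
Qed.

Lemma T_cpow j a : Tj j (cpow a (p ^ j)%N).
Proof.
move=> b; rewrite star_lam lam_cpow.
have -> : iter (p ^ j)%N (lam circ a) b = iter (p ^ j)%N (fun x => x + star circ a x) b.
  by apply: eq_iter => x; rewrite star_lam addrC subrK.
rewrite (gen_binom (starD hB a)) big_ord_recl /= bin0 mulr1n addrC addKr.
apply: mA_sum => i.
have [ip|ip] := ltnP (bump 0 i) p.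
  by case/dvdnP: (bin_dvd j ip) => q ->; rewrite mulnC; apply: mA_mul.
rewrite iter_zero ?(star0 hB) ?mul0rn; first exact: mA0.
by rewrite -ltnS (leq_trans np ip).
Qed.

Lemma T_key j i c : c \in Vs circ i -> Tj j (c *+ (p ^ j)%N).
Proof.
elim: i c => [|i IH] c.
  by rewrite /= inE => /eqP -> b; rewrite mul0rn (star_0 hB); apply: mA0.
move=> hc.
set K := (p ^ j)%N.
have K0 : (0 < K)%N by rewrite expn_gt0 prime_gt0.
have eX : cpow c K = c *+ K + \sum_(m < K.-1) iter m.+1 (star circ c) c *+ 'C(K, m.+2).
  have -> : cpow c K = iter K (fun y => c + y + star circ c y) 0.
    by apply: eq_iter => y; rewrite circ_star.
  rewrite (gen_geom (starD hB c)); case: K K0 => // K' _.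
  by rewrite big_ord_recl /= bin1.
pose W x := exists d, d \in Vs circ i /\ x = d *+ K.
have W0 : W 0 by exists 0; rewrite mul0rn Vs_0.
have WD x y : W x -> W y -> W (x + y).
  by move=> [d [hd ->]] [e [he ->]]; exists (d + e); rewrite Vs_add // mulrnDl.
have [d [hd ew]] : W (\sum_(m < K.-1) iter m.+1 (star circ c) c *+ 'C(K, m.+2)).
  apply: (big_ind W) => //; move=> m _.
  have hm : iter m.+1 (star circ c) c \in Vs circ i.
    have := iter_Vs m.+1 c hc; apply/subsetP/Vs_mono.
    by rewrite subSS leq_subr.
  have [mp|mp] := ltnP m.+2 p.
    case/dvdnP: (bin_dvd j mp) => q ->.
    by exists (iter m.+1 (star circ c) c *+ q); rewrite Vs_Mn // mulrnA.
  rewrite iter_zero ?mul0rn //.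
  by rewrite -ltnS (leq_trans np mp).
have [Xi [hX _]] := circ_inv hB (cpow c K).
set X := cpow c K in eX hX.
have ec : c *+ K = circ X (lam circ Xi (- d) *+ K).
  have -> : circ X (lam circ Xi (- d) *+ K) = X + lam circ X (lam circ Xi (- d) *+ K).
    by rewrite [lam circ X _]lamE [RHS]addrC subrK.
  rewrite (lamMn hB) -(lamM hB) hX (lam_0 hB) eX ew mulNrn addrK //.
rewrite ec; apply: T_circ; first exact: T_cpow.
by apply: IH; rewrite Vs_lam // Vs_opp.
Qed.

Lemma T_all j (a : A) : Tj j (a *+ (p ^ j)%N).
Proof. have h : a \in Vs circ n by rewrite (Vs_n hB pp cardA) inE. exact: T_key h. Qed.

Lemma star_mult i k x y : multA (p ^ i)%N x -> multA (p ^ k)%N y ->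
  multA (p ^ (i + k))%N (star circ x y).
Proof.
move=> [a ->] [b ->]; rewrite (starMn hB).
case: (T_all i a b) => c ->.
by exists c; rewrite -mulrnA expnD.
Qed.

Lemma mA_card (a : A) : a *+ #|A| = 0.
Proof.
have := @expg_cardG _ [set: A] a (in_setT a); rewrite cardsT -FinRing.zmodXgE //.
Qed.
End Main.



Theorem proposition4p1 (n p : nat) (A : finZmodType) (circ : A -> A -> A) :
  is_brace circ -> prime p -> (n.+1 < p)%N -> #|A| = (p ^ n)%N ->
  is_subbrace circ (multA p) /\
  (forall t : sterm A, leaves_in (multA p) t -> nleaves t = p.-1 ->
     seval circ t = 0) /\
  snilp_le circ (multA p) p.-1 /\
  (forall t : sterm A, flagged_in (multA p) t ->
     multA (p ^ nflag t) (seval circ t)) /\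
  (forall t : sterm A, flagged_in (multA p) t -> nflag t = p.-1 ->
     seval circ t = 0) /\
  (forall a : A, a *+ (p ^ p.-1) = 0).
Proof.
move=> hB pp np cardA.
have np' : (n < p)%N by apply: ltnW.
have SM := star_mult hB pp cardA np'.
have zero : forall a : A, a *+ (p ^ p.-1) = 0.
  move=> a; have : (p ^ n %| p ^ p.-1)%N by rewrite dvdn_exp2l // -ltnS prednK ?prime_gt0 // ltnW.
  case/dvdnP => q ->; rewrite mulnC mulrnA -cardA (mA_card a) mul0rn //.
have mz (x : A) : multA (p ^ p.-1)%N x -> x = 0 by move=> [a ->]; apply: zero.
have m1 (x : A) : multA 1 x by exists x; rewrite mulr1n.
have mp1 (x : A) : multA p x -> multA (p ^ 1)%N x by rewrite expn1.
have starp (x y : A) : multA p x -> multA p (star circ x y).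
  move=> hx; have := SM 1 0 x y (mp1 _ hx); rewrite expn0 addn0 expn1; apply; exact: m1.
have flag t : flagged_in (multA p) t -> multA (p ^ nflag t) (seval circ t).
  elim: t => [[] a|t1 IH1 t2 IH2] /=.
  - by move=> h; rewrite expn1; apply: h.
  - by move=> _; rewrite expn0.
  - by move=> [h1 h2]; apply: SM; [apply: IH1 | apply: IH2].
have leaf t : leaves_in (multA p) t -> multA (p ^ nleaves t) (seval circ t).
  elim: t => [b a|t1 IH1 t2 IH2] /=.
  - by rewrite expn1.
  - by move=> [h1 h2]; apply: SM; [apply: IH1 | apply: IH2].
have sp k x : spow circ (multA p) k x -> multA (p ^ k)%N x.
  elim => {k x}.
  - by move=> x h; rewrite expn1.
  - move=> i j a b j0 ji _ ha _ hb; have := SM _ _ _ _ ha hb.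
    by rewrite subnKC // ltnW.
  - by move=> i _; apply: mA0.
  - by move=> i x y _ _ hx _ hy; apply: mAD.
  - by move=> i x _ _ hx; apply: mAN.
split; last split; last split; last split; last split.
- split; first exact: mA0.
  split; first by move=> a b; apply: mAD.
  split; first by move=> a; apply: mAN.
  split; first by move=> e /(circ_id0 hB) ->; apply: mA0.
  split.
    by move=> a b ha hb; rewrite circ_star; apply: mAD; [apply: mAD | apply: starp].
  move=> e a b /(circ_id0 hB) -> ha.
  rewrite circ_star => e0.
  have -> : b = - (a + star circ a b) by apply/eqP; rewrite -addr_eq0 addrCA addrA e0.
  by apply: mAN; apply: mAD => //; apply: starp.
- by move=> t ht e; apply: mz; rewrite -e; apply: leaf.
- by move=> x /sp; apply: mz.
- exact: flag.
- by move=> t ht e; apply: mz; rewrite -e; apply: flag.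
- exact: zero.
Qed.
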